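(* Let $\nu_n$ and $\nu_n'$ be two neighborhood systems on $N_n$ such that $\nu_n$ is weakly finer than $\nu_n'$, i.e. $\nu_n(i)\subset\nu_n'(i)$ for every $i\in N_n$. Suppose that $\nu_n$ is undirected, and that a triangular array of sub-$\sigma$-fields $\{\mathcal{F}_i\}_{i\in N_n}$ of $\mathcal{F}$ is CND with respect to $(\nu_n,\mathcal{M})$ for some array of sub-$\sigma$-fields $\mathcal{M}=\{\mathcal{M}_i\}_{i\in N_n}$. Then $\{\mathcal{F}_i\}_{i\in N_n}$ is CND with respect to $(\nu_n',\mathcal{M})$.
   Context: Let $(\Omega,\mathcal{F},P)$ be a probability space and $N_n$ a finite set with $|N_n|=n$. A neighborhood system on $N_n$ is a map $\nu_n:N_n\to 2^{N_n}$ with $i\notin\nu_n(i)$ for all $i\in N_n$. It is undirected if $i\in\nu_n(j)$ implies $j\in\nu_n(i)$ for all $i,j\in N_n$. For $A\subset N_n$ let $\bar\nu_n(A)=\left(\bigcup_{i\in A}\nu_n(i)\right)\cup A$ and $\nu_n(A)=\bar\nu_n(A)\setminus A$. For an array of sub-$\sigma$-fields $\{\mathcal{M}_i\}_{i\in N_n}$ and $A\subset N_n$, $\mathcal{M}_A$ denotes the smallest $\sigma$-field containing all $\mathcal{M}_i$, $i\in A$ (the trivial $\sigma$-field if $A=\varnothing$); the same notation is used for other arrays (e.g. $\mathcal{F}_A$), and $\mathcal{G}_1\vee\mathcal{G}_2$ denotes the smallest $\sigma$-field containing $\mathcal{G}_1$ and $\mathcal{G}_2$. Definition (CND): given a neighborhood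 system $\nu_n$ and $\mathcal{M}=\{\mathcal{M}_i\}_{i\in N_n}$, the $\sigma$-fields $\{\mathcal{F}_i\}_{i\in N_n'}$ for a subset $N_n'\subset N_n$ are conditionally neighborhood dependent (CND) with respect to $(\nu_n,\mathcal{M})$ if for any $A,B\subset N_n'$ with $A\subset N_n'\setminus\bar\nu_n(B)$ and $B\subset N_n'\setminus\bar\nu_n(A)$, the $\sigma$-fields $\mathcal{F}_A\vee\mathcal{M}_A$ and $\mathcal{F}_B\vee\mathcal{M}_B$ are conditionally independent given $\mathcal{M}_{\nu_n(A)}$. Here $N_n'=N_n$. *)

(* Defs.v *)
From HB Require Import structures.
From mathcomp Require Import all_boot all_order all_algebra.
From mathcomp Require Import all_classical all_reals all_analysis.
Set Implicit Arguments. Unset Strict Implicit. Unset Printing Implicit Defensive.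
Import Order.TTheory GRing.Theory Num.Theory.
Local Open Scope classical_set_scope.
Local Open Scope ring_scope.

(** Neighborhood systems on a finite index set I (playing the role of N_n). *)
Definition nbhd_system (I : finType) (nu : I -> {set I}) : Prop :=
  forall i, i \notin nu i.

Definition undirected (I : finType) (nu : I -> {set I}) : Prop :=
  forall i j, i \in nu j -> j \in nu i.

Definition nbar (I : finType) (nu : I -> {set I}) (A : {set I}) : {set I} :=
  (\bigcup_(i in A) nu i) :|: A.
Definition nbd (I : finType) (nu : I -> {set I}) (A : {set I}) : {set I} :=
  nbar nu A :\: A.

Definition sub_sigma (d : measure_display) (T : measurableType d)
  (G : set (set T)) : Prop :=
  sigma_algebra setT G /\ G `<=` measurable.

(** M_A : smallest sigma-field containing all M_i, i in A (trivial if A empty). *)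
Definition sig_of (T : Type) (I : finType) (M : I -> set (set T)) (A : {set I})
  : set (set T) :=
  <<s \bigcup_(i in [set i | i \in A]) M i >>.

Definition sig_join (T : Type) (G1 G2 : set (set T)) : set (set T) :=
  <<s G1 `|` G2 >>.

Definition sub_measurable (d : measure_display) (T : measurableType d)
  (R : realType) (H : set (set T)) (f : T -> R) : Prop :=
  forall B : set R, measurable B -> H (f @^-1` B).

Definition cond_prob_version (d : measure_display) (T : measurableType d)
  (R : realType) (P : probability T R) (H : set (set T)) (A : set T)
  (f : T -> R) : Prop :=
  [/\ sub_measurable H f,
      P.-integrable setT (EFin \o f) &
      forall C, H C -> (\int[P]_(x in C) (f x)%:E = P (A `&` C))%E].

(** Conditional independence of G1 and G2 given H:
    for all A in G1, B in G2, P(A /\ B | H) = P(A | H) P(B | H) a.s.,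
    expressed via versions of the conditional probabilities (which exist and
    are unique P-a.s.). *)
Definition cond_indep (d : measure_display) (T : measurableType d)
  (R : realType) (P : probability T R) (G1 G2 H : set (set T)) : Prop :=
  forall A B, G1 A -> G2 B ->
    exists f g : T -> R,
      [/\ cond_prob_version P H A f,
          cond_prob_version P H B g &
          cond_prob_version P H (A `&` B) (fun x => f x * g x)].

(** CND of {F_i}_{i in I} w.r.t. (nu, M), with N_n' = N_n. *)
Definition CND (d : measure_display) (T : measurableType d) (R : realType)
  (P : probability T R) (I : finType) (nu : I -> {set I})
  (M F : I -> set (set T)) : Prop :=
  forall A B : {set I},
    A \subset ~: nbar nu B -> B \subset ~: nbar nu A ->
    cond_indep P (sig_join (sig_of F A) (sig_of M A))
                 (sig_join (sig_of F B) (sig_of M B))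
                 (sig_of M (nbd nu A)).

(* Main.v *)
Require Import Defs.
From HB Require Import structures.
From mathcomp Require Import all_boot all_order all_algebra.
From mathcomp Require Import all_classical all_reals all_analysis.
From mathcomp Require Import measurable_realfun.
Set Implicit Arguments. Unset Strict Implicit. Unset Printing Implicit Defensive.
Import Order.TTheory GRing.Theory Num.Theory.
Local Open Scope classical_set_scope.
Local Open Scope ring_scope.

Section gen.
Context d (T : measurableType d) (R : realType) (P : probability T R).
Variable G : set (set T).
Hypothesis hG : G `<=` measurable.
Local Notation TH := (g_sigma_algebraType G).

Lemma sG_meas : <<s G >> `<=` measurable.
Proof. exact: smallest_sub (@sigma_algebra_measurable _ T) hG. Qed.

Definition toH : T -> TH := id.

Lemma mtoH : measurable_fun [set: T] toH.
Proof. by move=> _ Y mY; rewrite setTI; exact: sG_meas. Qed.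

HB.instance Definition _ := isMeasurableFun.Build _ _ T TH toH mtoH.

Definition PH := distribution P toH.

Definition nuT (b : set T) (mb : measurable b) : set T -> \bar R :=
  fun C => P (C `&` b).
Definition nuH (b : set T) (mb : measurable b) : set TH -> \bar R :=
  fun C => P (C `&` b).

Section b.
Variable b : set T.
Hypothesis mb : measurable b.
Local Notation nuT := (nuT mb).
Local Notation nuH := (nuH mb).

Let nuT0 : nuT set0 = 0%E. Proof. by rewrite /nuT set0I measure0. Qed.
Let nuT_ge0 C : (0 <= nuT C)%E. Proof. exact: measure_ge0. Qed.
Let nuT_sa : semi_sigma_additive nuT.
Proof. exact: (@measure_semi_sigma_additive _ _ _ (mrestr P mb)). Qed.
HB.instance Definition _ := isMeasure.Build _ _ _ nuT nuT0 nuT_ge0 nuT_sa.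
Let nuT_fin : fin_num_fun nuT.
Proof. move=> C mC; rewrite ge0_fin_numE ?measure_ge0 //. 
by rewrite (le_lt_trans (probability_le1 _ _)) ?ltry //; exact: measurableI. Qed.
HB.instance Definition _ := Measure_isFinite.Build _ _ _ nuT nuT_fin.

Let nuH0 : nuH set0 = 0%E. Proof. by rewrite /nuH set0I measure0. Qed.
Let nuH_ge0 C : (0 <= nuH C)%E. Proof. exact: measure_ge0. Qed.
Let nuH_sa : semi_sigma_additive nuH.
Proof. exact: (@measure_semi_sigma_additive _ _ _ (pushforward nuT toH)). Qed.
HB.instance Definition _ := isMeasure.Build _ _ _ nuH nuH0 nuH_ge0 nuH_sa.
Let nuH_fin : fin_num_fun nuH.
Proof. move=> C mC; exact: (nuT_fin (sG_meas mC)). Qed.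
HB.instance Definition _ := Measure_isFinite.Build _ _ _ nuH nuH_fin.

End b.

Definition liftH (U : Type) (f : T -> U) : TH -> U := f.

Local Open Scope ereal_scope.

Lemma subm_mfun (f : T -> R) :
  sub_measurable <<s G >> f -> measurable_fun [set: TH] (liftH f).
Proof. by move=> hf _ B mB; rewrite setTI; exact: hf. Qed.

Lemma mfun_subm (f : T -> R) :
  measurable_fun [set: TH] (liftH f) -> sub_measurable <<s G >> f.
Proof. by move=> hf B mB; have := hf measurableT B mB; rewrite setTI. Qed.

Lemma mfunH_T d' (V : measurableType d') (f : T -> V) :
  measurable_fun [set: TH] (liftH f) -> measurable_fun [set: T] f.
Proof. by move=> hf _ B mB; apply: sG_meas; exact: hf. Qed.

Lemma int_PH (F : T -> \bar R) (C : set T) :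
  <<s G >> C -> measurable_fun [set: TH] (liftH F) ->
  \int[PH]_(x in C) F x = \int[P]_(x in C) F x.
Proof.
move=> mC mF; rewrite integralE [RHS]integralE.
rewrite /PH /distribution.
rewrite !ge0_integral_pushforward //.
all: try (exact: measurable_funTS (measurable_funeneg mF)).
all: try (exact: measurable_funTS (measurable_funepos mF)).
Qed.

Lemma ae_PH (Q : T -> Prop) : (\forall x \ae PH, Q x) -> (\forall x \ae P, Q x).
Proof.
case=> N [mN N0 sN]; exists N; split => //; first exact: sG_meas.
Qed.


Lemma U_ae (F1 F2 : T -> \bar R) :
  measurable_fun [set: TH] (liftH F1) -> measurable_fun [set: TH] (liftH F2) ->
  P.-integrable [set: T] F1 ->
  (forall C, <<s G >> C -> \int[P]_(x in C) F1 x = \int[P]_(x in C) F2 x) ->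
  ae_eq P [set: T] F1 F2.
Proof.
move=> mF1 mF2 iF1 hC; apply: ae_PH.
have := @integral_ae_eq _ _ _ PH [set: TH] measurableT (liftH F2) (liftH F1).
apply.
- exact: (integrable_pushforward mtoH mF1 iF1 measurableT).
- exact: mF2.
- move=> E _ mE; rewrite !int_PH //; exact: hC.
Qed.

Lemma U_aeH (F1 F2 : T -> \bar R) :
  measurable_fun [set: TH] (liftH F1) -> measurable_fun [set: TH] (liftH F2) ->
  P.-integrable [set: T] F1 ->
  (forall C, <<s G >> C -> \int[P]_(x in C) F1 x = \int[P]_(x in C) F2 x) ->
  ae_eq PH [set: TH] (liftH F1) (liftH F2).
Proof.
move=> mF1 mF2 iF1 hC.
have := @integral_ae_eq _ _ _ PH [set: TH] measurableT (liftH F2) (liftH F1).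
apply.
- exact: (integrable_pushforward mtoH mF1 iF1 measurableT).
- exact: mF2.
- move=> E _ mE; rewrite !int_PH //; exact: hC.
Qed.

Lemma nuH_dom (b : set T) (mb : measurable b) : nuH mb `<< PH.
Proof.
apply/null_content_dominatesP => A mA PA0.
apply/eqP; rewrite -measure_le0 -PA0 /nuH /PH /distribution /pushforward /=.
apply: le_measure; rewrite ?inE; [exact: measurableI (sG_meas mA) mb|exact: sG_meas|].
exact: subIsetl.
Qed.


Definition ver (b : set T) (g : T -> R) := cond_prob_version P <<s G >> b g.

Lemma ver_m b g : ver b g -> measurable_fun [set: TH] (liftH g).
Proof. by case=> /subm_mfun. Qed.

Lemma ver_mE b g : ver b g -> measurable_fun [set: TH] (liftH (EFin \o g)).
Proof. by move=> /ver_m mg; exact: measurableT_comp mg. Qed.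

Lemma ver_int b g C : ver b g -> <<s G >> C ->
  \int[P]_(x in C) (g x)%:E = P (b `&` C).
Proof. by case=> _ _; apply. Qed.

Lemma ver_intg b g : ver b g -> P.-integrable [set: T] (EFin \o g).
Proof. by case. Qed.

Lemma intPH_P (F : T -> \bar R) : measurable_fun [set: TH] (liftH F) ->
  PH.-integrable [set: TH] (liftH F) -> P.-integrable [set: T] F.
Proof.
move=> mF /integrableP [_ iF]; apply/integrableP; split; first exact: mfunH_T.
rewrite -int_PH //; first exact: (@measurableT _ TH).
exact: measurableT_comp mF.
Qed.

Section rho.
Variables (b : set T) (mb : measurable b).
Let rho := Radon_Nikodym_SigmaFinite.f (nuH mb) PH.

Let rho_ge0 x : 0 <= rho x.
Proof. exact: Radon_Nikodym_SigmaFinite.f_ge0 (nuH_dom mb) x. Qed.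
Let rho_fin x : rho x \is a fin_num.
Proof. exact: Radon_Nikodym_SigmaFinite.f_fin_num (nuH_dom mb) x. Qed.
Let rho_m : measurable_fun [set: TH] (liftH rho).
Proof. exact: measurable_int (Radon_Nikodym_SigmaFinite.f_integrable (nuH_dom mb)). Qed.
Let rho_intP : P.-integrable [set: T] rho.
Proof. exact: intPH_P rho_m (Radon_Nikodym_SigmaFinite.f_integrable (nuH_dom mb)). Qed.
Let rho_int C : <<s G >> C -> \int[P]_(x in C) rho x = P (b `&` C).
Proof.
move=> mC; rewrite -int_PH //.
rewrite -(Radon_Nikodym_SigmaFinite.f_integral (nuH_dom mb)) //.
by rewrite /nuH setIC.
Qed.

Lemma V0 g : ver b g -> \forall x \ae P, (0 <= g x)%R.
Proof.
move=> vg.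
have := @U_ae (EFin \o g) rho (ver_mE vg) rho_m (ver_intg vg).
move=> /(_ _) h; have {h} := h (fun C mC => etrans (ver_int vg mC) (esym (rho_int mC))).
apply: filterS => x /(_ I) /= gE; by rewrite -lee_fin gE rho_ge0.
Qed.

Lemma ver_exists : exists g, ver b g.
Proof.
have eqf : EFin \o (fine \o rho) = rho by apply/funext => x /=; rewrite fineK.
exists (fine \o rho); split.
- apply: mfun_subm; exact: measurableT_comp (fine_measurable measurableT) rho_m.
- by rewrite eqf.
- by move=> C mC; rewrite -rho_int //; apply: eq_integral => x _ /=; rewrite fineK.
Qed.

End rho.

Lemma ver_compl b g : measurable b -> ver b g -> ver (~` b) (fun x => 1 - g x)%R.
Proof.
move=> mb vg.
have eqf : EFin \o (fun x => 1 - g x)%R = (fun x => (EFin \o cst 1%R) x - (EFin \o g) x).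
  by apply/funext => x; rewrite /= EFinB.
split.
- apply: mfun_subm; apply: measurable_funB; first exact: measurable_cst.
  exact: ver_m vg.
- rewrite eqf; apply: integrableB => //; first exact: finite_measure_integrable_cst.
  exact: ver_intg vg.
- move=> C mC; have mCT := sG_meas mC.
  have -> : \int[P]_(x in C) ((1 - g x)%R)%:E =
     \int[P]_(x in C) ((EFin \o cst 1%R) x - (EFin \o g) x).
    by apply: eq_integral => x _; rewrite /= EFinB.
  rewrite integralB //; last first.
    - exact: integrableS (ver_intg vg).
    - exact: finite_measure_integrable_cst.
  have -> : \int[P]_(x in C) (EFin \o cst 1%R) x = P C.
    by have := integral_cst P mCT 1; rewrite mul1e; exact.
  rewrite (ver_int vg mC).
  rewrite (setIC (~` b)) -setDE measureD //; first by rewrite setIC.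
  by rewrite (le_lt_trans (probability_le1 _ _)) ?ltry.
Qed.

Lemma V01 b g : measurable b -> ver b g -> \forall x \ae P, (0 <= g x <= 1)%R.
Proof.
move=> mb vg.
have h1 := V0 mb vg.
have h2 := V0 (measurableC mb) (ver_compl mb vg).
apply: filterS2 h1 h2 => x -> /=; by rewrite subr_ge0.
Qed.

Definition clamp (g : T -> R) : T -> R := (cst 0%R) \max (g \min cst 1%R).

Lemma clamp01 g x : (0 <= clamp g x <= 1)%R.
Proof.
rewrite /clamp /=; apply/andP; split; first by rewrite le_max lexx.
by rewrite ge_max ler01 ge_min lexx orbT.
Qed.

Lemma clamp_abs g x : (`|clamp g x| <= `|g x|)%R.
Proof.
rewrite /clamp /=. 
have [g0|g0] := leP (g x) 0%R.
  by rewrite max_l ?normr0 ?normr_ge0 // ge_min g0.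
rewrite max_r; last by rewrite le_min ltW // ler01.
rewrite ger0_norm; last by rewrite le_min ltW // ler01.
rewrite gtr0_norm // ge_min lexx //.
Qed.

Lemma ver_clamp b g : measurable b -> ver b g -> ver b (clamp g).
Proof.
move=> mb vg.
have mc : measurable_fun [set: TH] (liftH (clamp g)).
  apply: measurable_maxr; first exact: measurable_cst.
  apply: measurable_minr; first exact: ver_m vg.
  exact: measurable_cst.
have mcT : measurable_fun [set: T] (EFin \o clamp g).
  exact: measurableT_comp (mfunH_T mc).
have ae := V01 mb vg.
split.
- exact: mfun_subm.
- apply: le_integrable (ver_intg vg) => //.
  by move=> x _; rewrite /= lee_fin; exact: clamp_abs.
- move=> C mC; rewrite -(ver_int vg mC).
  apply: ae_eq_integral => //.
  + exact: sG_meas.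
  + apply: measurable_funTS; exact: mcT.
  + apply: measurable_funTS; exact: (mfunH_T (ver_mE vg)).
  + apply: filterS ae => x /andP[g0 g1] _.
    by rewrite /clamp /= min_l // max_r.
Qed.

Lemma ver_exists01 b : measurable b ->
  exists g, ver b g /\ forall x, (0 <= g x <= 1)%R.
Proof.
move=> mb; have [g vg] := ver_exists mb.
by exists (clamp g); split; [exact: ver_clamp|exact: clamp01].
Qed.


Section PO.
Variables (b : set T) (mb : measurable b).

Lemma nuT_dom : nuT mb `<< P.
Proof.
apply/null_content_dominatesP => A mA PA0.
apply/eqP; rewrite -measure_le0 -PA0 /nuT.
apply: le_measure; rewrite ?inE; [exact: measurableI mA mb|exact: mA|].
exact: subIsetl.
Qed.

Lemma nuT_le S : measurable S -> nuT mb S <= P S.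
Proof.
move=> mS; apply: le_measure; rewrite ?inE //.
all: try exact: measurableI.
all: try exact: subIsetl.
Qed.

Let rc := Radon_Nikodym (charge_of_finite_measure (nuH mb)) PH.
Let sg := Radon_Nikodym (charge_of_finite_measure (nuT mb)) P.

Lemma PO g h : ver b g -> (forall x, 0 <= g x <= 1)%R ->
  sub_measurable <<s G >> h -> P.-integrable [set: T] (EFin \o h) ->
  \int[P]_x ((h x * g x)%R)%:E = \int[P]_(x in b) (h x)%:E.
Proof.
move=> vg g01 hh ih.
have mh : measurable_fun [set: TH] (liftH h) := subm_mfun hh.
have mg := ver_m vg.
have mhT : measurable_fun [set: T] h := mfunH_T mh.
have mhE : measurable_fun [set: TH] (liftH (EFin \o h)) by exact: measurableT_comp mh.
have mhg : measurable_fun [set: TH] (liftH (fun x => ((h x * g x)%R)%:E)).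
  exact: measurableT_comp (measurable_funM mh mg).
have mrc : measurable_fun [set: TH] (liftH rc).
  apply: (measurable_int PH); exact: (@Radon_Nikodym_integrable _ _ _ (charge_of_finite_measure (nuH mb)) PH (nuH_dom mb)).
have ihT : (nuT mb).-integrable [set: T] (EFin \o h).
  apply/integrableP; split; first exact: measurableT_comp mhT.
  apply: le_lt_trans (integrableP _ _ _ ih).2.
  apply: ge0_le_measure_integral => //.
  - exact: nuT_le.
  - apply: measurableT_comp; first exact: abse_measurable. exact: measurableT_comp mhT.
have ihH : (nuH mb).-integrable [set: TH] (liftH (EFin \o h)).
  exact: (integrable_pushforward (mu := nuT mb) mtoH mhE ihT measurableT).
rewrite -int_PH //; last exact: (@measurableT _ TH).
have aeg : ae_eq PH [set: TH] (liftH (EFin \o g)) (liftH rc).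
  apply: (U_aeH (ver_mE vg) mrc (ver_intg vg)).
  move=> C mC; rewrite (ver_int vg mC) -int_PH // -Radon_Nikodym_integral //.
  - by rewrite /= /nuH setIC.
  - exact: nuH_dom.
transitivity (\int[PH]_(x in [set: TH]) ((h x)%:E * rc x)).
  apply: ae_eq_integral => //.
  - exact: emeasurable_funM mhE mrc.
  - apply: filterS aeg => x /= hx /hx; rewrite /liftH /= => <-; by rewrite EFinM.
rewrite Radon_Nikodym_change_of_variables //; last exact: nuH_dom.
change (\int[pushforward (nuT mb) toH]_(x in [set: TH]) (liftH (EFin \o h)) x =
  \int[P]_(x in b) (h x)%:E).
rewrite integral_pushforward // preimage_setT.
rewrite -(Radon_Nikodym_change_of_variables nuT_dom measurableT ihT).
have mhTE : measurable_fun [set: T] (EFin \o h) by apply/measurable_EFinP.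
have msg : measurable_fun [set: T] sg.
  apply: (measurable_int P); exact: (@Radon_Nikodym_integrable _ _ _ (charge_of_finite_measure (nuT mb)) P nuT_dom).
have mi : measurable_fun [set: T] (EFin \o (\1_b : T -> R)).
  by apply/measurable_EFinP; exact: measurable_indic.
have aes : ae_eq P [set: T] sg (EFin \o (\1_b : T -> R)).
  apply: integral_ae_eq => //.
  - exact: (@Radon_Nikodym_integrable _ _ _ (charge_of_finite_measure (nuT mb)) P nuT_dom).
  - move=> E _ mE; rewrite -Radon_Nikodym_integral //; last exact: nuT_dom.
    by rewrite integral_indic // /= /nuT setIC.
transitivity (\int[P]_(x in [set: T]) ((h x)%:E * ((\1_b : T -> R) x)%:E)).
  apply: ae_eq_integral => //.
  - exact: emeasurable_funM mhTE msg.
  - exact: emeasurable_funM mhTE mi.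
  - by apply: filterS aes => x /= hx /hx e; congr (_ * _); exact: e.
rewrite [RHS]integral_mkcond; apply: eq_integral => x _.
rewrite /patch indicE; case: ifP => _ /=; first by rewrite mule1.
by rewrite mule0.
Qed.

End PO.

Lemma EXT (f : T -> R) (a : set T) : measurable a -> setI_closed G ->
  P.-integrable [set: T] (EFin \o f) ->
  (forall C, G C -> \int[P]_(x in C) (f x)%:E = P (a `&` C)) ->
  \int[P]_x (f x)%:E = P a ->
  forall C, <<s G >> C -> \int[P]_(x in C) (f x)%:E = P (a `&` C).
Proof.
move=> ma GI ifT hG' hT.
have mfT : measurable_fun [set: T] (EFin \o f) := measurable_int _ ifT.
apply: (@dynkin_induction _ TH G
  (fun S : set TH => \int[P]_(x in S) (f x)%:E = P (a `&` S))) => //.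
- by rewrite setIT.
- move=> S mS QS; have mST := sG_meas mS.
  have mSC : measurable (~` (S : set T)) by exact: measurableC.
  have dj : [disjoint (S : set T) & ~` S] by rewrite /disj_set setICr.
  have e : P a = P (a `&` S) + \int[P]_(x in ~` S) (f x)%:E.
    rewrite -hT -QS -integral_setU //; first by rewrite setUv.
    exact: measurable_funTS mfT.
  rewrite -setDE measureD // ?e.
  + rewrite [X in X - _]e (addeC (P (a `&` S))) addeK //.
  + apply: fin_num_measure; exact: measurableI.
  + apply: (le_lt_trans (probability_le1 _ ma)); exact: ltry.
- move=> F mF tF QF; have mFT n := sG_meas (mF n).
  rewrite integral_bigcup //; last first.
    apply: integrableS ifT => //; exact: bigcupT_measurable.
  rewrite setI_bigcupr measure_bigcup //.
  + rewrite [RHS](eq_eseriesl _ _ (Q := xpredT)); last by move=> n; rewrite in_setT.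
    by apply: eq_eseriesr => n _; exact: QF.
  + by move=> n _; exact: measurableI.
  + exact: trivIset_setIl.
Qed.

Lemma ver_ae a f1 f2 : ver a f1 -> ver a f2 ->
  ae_eq P [set: T] (EFin \o f1) (EFin \o f2).
Proof.
move=> v1 v2; apply: U_ae (ver_mE v1) (ver_mE v2) (ver_intg v1) _.
by move=> C mC; rewrite (ver_int v1 mC) (ver_int v2 mC).
Qed.

Lemma clamp_ae b g : measurable b -> ver b g ->
  \forall x \ae P, clamp g x = g x.
Proof.
move=> mb vg; apply: filterS (V01 mb vg) => x /andP[g0 g1].
by rewrite /clamp /= min_l // max_r.
Qed.

End gen.

Section comb.
Variables (I : finType).

Lemma nbarP (nu : I -> {set I}) (X : {set I}) x :
  reflect ((exists2 i, i \in X & x \in nu i) \/ x \in X) (x \in nbar nu X).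
Proof.
rewrite /nbar inE; apply: (iffP orP) => [[/bigcupP[i iX xi]|xX]|[[i iX xi]|xX]].
- by left; exists i.
- by right.
- by left; apply/bigcupP; exists i.
- by right.
Qed.

Lemma nbdP (nu : I -> {set I}) (X : {set I}) x :
  x \in nbd nu X = (x \in nbar nu X) && (x \notin X).
Proof. by rewrite /nbd !inE andbC. Qed.

Variables (nu nu' : I -> {set I}).
Hypothesis sub : forall i, nu i \subset nu' i.
Hypothesis und : undirected nu.

Lemma nbar_sub (X : {set I}) : nbar nu X \subset nbar nu' X.
Proof.
apply/fintype.subsetP => x /nbarP [[i iX xi]|xX]; apply/nbarP; last by right.
by left; exists i => //; exact: (fintype.subsetP (sub i)).
Qed.

Lemma nbd_sub (X : {set I}) : nbd nu X \subset nbd nu' X.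
Proof.
apply/fintype.subsetP => x; rewrite !nbdP => /andP[h ->]; rewrite andbT.
exact: (fintype.subsetP (nbar_sub X)).
Qed.

Lemma comb (A B : {set I}) :
  A \subset ~: nbar nu' B -> B \subset ~: nbar nu' A ->
  A \subset ~: nbar nu (B :|: (nbd nu' A :\: nbd nu A)) /\
  (B :|: (nbd nu' A :\: nbd nu A)) \subset ~: nbar nu A.
Proof.
move=> hA hB; split.
- apply/fintype.subsetP => a aA; rewrite inE; apply/negP => /nbarP [[i]|].
  + rewrite inE => /orP[iB ai|].
    * have := fintype.subsetP hA a aA; rewrite inE => /negP; apply.
      apply/nbarP; left; exists i => //; exact: (fintype.subsetP (sub i)).
    * rewrite finset.in_setD => /andP[inA]; rewrite nbdP => /andP[_ iA] ai.
      move: inA; rewrite nbdP iA andbT => /negP; apply.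
      apply/nbarP; left; exists a => //; exact: und.
  + rewrite inE => /orP[aB|].
    * have := fintype.subsetP hA a aA; rewrite inE => /negP; apply.
      by apply/nbarP; right.
    * by rewrite finset.in_setD !nbdP aA !andbF.
- apply/fintype.subsetP => x; rewrite inE => /orP[xB|].
  + have := fintype.subsetP hB x xB; rewrite !finset.in_setC => /negP h; apply/negP => h'; apply: h.
    exact: (fintype.subsetP (nbar_sub A)).
  + rewrite finset.in_setD => /andP[]; rewrite !nbdP => nA /andP[xb xA].
    rewrite finset.in_setC; apply/negP => xb'; move: nA; by rewrite xb' xA.
Qed.

Lemma nbd_split (A : {set I}) :
  nbd nu' A = nbd nu A :|: (nbd nu' A :\: nbd nu A).
Proof.
apply/setP => x; rewrite finset.in_setU finset.in_setD; case: (boolP (x \in nbd nu A)) => h //=.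
by rewrite (fintype.subsetP (nbd_sub A) _ h).
Qed.

End comb.

Section sig.
Context d (T : measurableType d) (I : finType).

Lemma sig_of_meas (M : I -> set (set T)) S :
  (forall i, sub_sigma (M i)) -> sig_of M S `<=` measurable.
Proof.
move=> hM; apply: smallest_sub; first exact: sigma_algebra_measurable.
by move=> C [i _ MiC]; exact: (hM i).2.
Qed.

Lemma sig_join_meas (G1 G2 : set (set T)) :
  G1 `<=` measurable -> G2 `<=` measurable -> sig_join G1 G2 `<=` measurable.
Proof.
move=> h1 h2; apply: smallest_sub; first exact: sigma_algebra_measurable.
by move=> C [/h1|/h2].
Qed.

Lemma sig_of_mono (M : I -> set (set T)) (S S' : {set I}) :
  S \subset S' -> sig_of M S `<=` sig_of M S'.
Proof.
move=> sS; apply: sub_smallest2r; first exact: smallest_sigma_algebra.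
move=> C [i /= iS MiC]; exists i => //=; exact: (fintype.subsetP sS).
Qed.

Lemma sig_join_mono (G1 G2 G1' G2' : set (set T)) :
  G1 `<=` G1' -> G2 `<=` G2' -> sig_join G1 G2 `<=` sig_join G1' G2'.
Proof.
move=> h1 h2; apply: sub_smallest2r; first exact: smallest_sigma_algebra.
by move=> C [/h1|/h2] h; [left|right].
Qed.

Lemma sub_join_l (G1 G2 : set (set T)) : G1 `<=` sig_join G1 G2.
Proof. by move=> C h; apply: sub_gen_smallest; left. Qed.

Lemma sub_join_r (G1 G2 : set (set T)) : G2 `<=` sig_join G1 G2.
Proof. by move=> C h; apply: sub_gen_smallest; right. Qed.

Lemma genI (G0 : set (set T)) A B : <<s G0 >> A -> <<s G0 >> B -> <<s G0 >> (A `&` B).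
Proof. exact: (@measurableI _ (g_sigma_algebraType G0)). Qed.

Lemma genT (G0 : set (set T)) : <<s G0 >> [set: T].
Proof. exact: (@measurableT _ (g_sigma_algebraType G0)). Qed.

End sig.

Local Open Scope ereal_scope.

Lemma setI_shuffle (U : Type) (a b z w : set U) :
  a `&` (z `&` (w `&` b)) = (a `&` b) `&` (z `&` w).
Proof. by apply/seteqP; split => x /=; tauto. Qed.

Unset Implicit Arguments.

Theorem lemma2p1 (d : measure_display) (T : measurableType d) (R : realType)
  (P : probability T R) (I : finType) (nu nu' : I -> {set I})
  (M F : I -> set (set T)) :
  nbhd_system nu -> nbhd_system nu' ->
  (forall i, nu i \subset nu' i) ->
  undirected nu ->
  (forall i, sub_sigma (F i)) ->
  (forall i, sub_sigma (M i)) ->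
  CND P nu M F -> CND P nu' M F.
Proof.
move=> _ _ hsub hund hF hM hCND A B hA hB.
set D := nbd nu' A :\: nbd nu A.
have [hA' hB'] := comb hsub hund hA hB.
have H0 := hCND A (B :|: D) hA' hB'.
set X := sig_join (sig_of F A) (sig_of M A) in H0 *.
set Y' := sig_join (sig_of F (B :|: D)) (sig_of M (B :|: D)) in H0.
set Y := sig_join (sig_of F B) (sig_of M B).
set Gz := \bigcup_(i in [set i | i \in nbd nu A]) M i.
set Z := sig_of M (nbd nu A) in H0.
have eZ : Z = <<s Gz >> by [].
set W := sig_of M D.
set Gpi := [set C | exists z w, Z z /\ W w /\ C = z `&` w].
have hGz : Gz `<=` measurable by move=> C [i _ MiC]; exact: (hM i).2.
have mZ : Z `<=` measurable by exact: sig_of_meas.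
have mW : W `<=` measurable by exact: sig_of_meas.
have hGpi : Gpi `<=` measurable.
  by move=> C [z [w [zZ [wW ->]]]]; apply: measurableI; [exact: mZ|exact: mW].
have mX : X `<=` measurable.
  by apply: sig_join_meas; exact: sig_of_meas.
have mY' : Y' `<=` measurable.
  by apply: sig_join_meas; exact: sig_of_meas.
have ZT : Z setT by exact: genT.
have WT : W setT by exact: genT.
have ZG : Z `<=` <<s Gpi >>.
  move=> z zZ; apply: sub_gen_smallest; exists z, setT; split => //; split => //.
  by rewrite setIT.
have WG : W `<=` <<s Gpi >>.
  move=> w wW; apply: sub_gen_smallest; exists setT, w; split => //; split => //.
  by rewrite setTI.
have piI : setI_closed Gpi.
  move=> _ _ [z1 [w1 [z1Z [w1W ->]]]] [z2 [w2 [z2Z [w2W ->]]]].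
  exists (z1 `&` z2), (w1 `&` w2); split; first exact: genI.
  split; first exact: genI.
  by apply/seteqP; split => x /=; tauto.
have eH : sig_of M (nbd nu' A) = <<s Gpi >>.
  apply/seteqP; split.
  - apply: smallest_sub; first exact: smallest_sigma_algebra.
    move=> C [i /= iA MiC].
    move: iA; rewrite (nbd_split hsub A) finset.in_setU => /orP[iZ|iD].
    + apply: ZG; apply: sub_gen_smallest; by exists i.
    + apply: WG; apply: sub_gen_smallest; by exists i.
  - apply: smallest_sub; first exact: smallest_sigma_algebra.
    move=> _ [z [w [zZ [wW ->]]]]; apply: genI.
    + exact: (sig_of_mono (nbd_sub hsub A)).
    + apply: (sig_of_mono (S := D)) => //.
      by apply/fintype.subsetP => x; rewrite finset.in_setD => /andP[].
have WY' : W `<=` Y'.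
  move=> w wW; apply: sub_join_r; apply: (sig_of_mono (S := D)) => //.
  exact: finset.subsetUr.
have YY' : Y `<=` Y'.
  apply: sig_join_mono; apply: sig_of_mono; exact: finset.subsetUl.
have Y'T : Y' setT by exact: genT.
rewrite eH => a b Xa Yb.
have ma := mX _ Xa.
have mb := mY' _ (YY' _ Yb).
have [fa [g0 [vfa _ _]]] := H0 a setT Xa Y'T.
have vfaZ : ver P Gz a fa := vfa.
have mfa : measurable_fun [set: g_sigma_algebraType Gz] (liftH fa) := ver_m vfaZ.
have ifa : P.-integrable [set: T] (EFin \o fa) := ver_intg vfaZ.
have mfaT : measurable_fun [set: T] fa := mfunH_T hGz mfa.
have K : forall y z, Y' y -> Z z ->
    \int[P]_(x in z `&` y) (fa x)%:E = P (a `&` (z `&` y)).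
  move=> y z Yy Zz.
  have my := mY' _ Yy.
  have mz := mZ _ Zz.
  have [f [g [vf vg vfg]]] := H0 a y Xa Yy.
  have vfZ : ver P Gz a f := vf.
  have vgZ : ver P Gz y g := vg.
  have vfgZ : ver P Gz (a `&` y) (fun x => f x * g x)%R := vfg.
  have vcg := ver_clamp hGz my vgZ.
  pose h x := ((\1_z : T -> R) x * fa x)%R.
  have mh : measurable_fun [set: g_sigma_algebraType Gz] (liftH h).
    apply: measurable_funM => //; exact: measurable_indic.
  have mhT : measurable_fun [set: T] h := mfunH_T hGz mh.
  have ih : P.-integrable [set: T] (EFin \o h).
    apply: le_integrable ifa => //.
    - by apply/measurable_EFinP.
    - move=> x _; rewrite /h /= lee_fin normrM indicE.
      by case: (x \in z); rewrite ?normr1 ?normr0 ?mul1r ?mul0r.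
  rewrite integral_mkcondl.
  transitivity (\int[P]_(x in y) (h x)%:E).
    apply: eq_integral => x _; rewrite /h /patch indicE.
    by case: ifP => _; rewrite ?mul1r ?mul0r.
  rewrite -(PO hGz my vcg (clamp01 g) (mfun_subm mh) ih).
  transitivity (\int[P]_(x in z) ((fa x * clamp g x)%R)%:E).
    rewrite [RHS]integral_mkcond; apply: eq_integral => x _.
    rewrite /h /patch indicE.
    by case: ifP => _; rewrite ?mul1r ?mul0r.
  transitivity (\int[P]_(x in z) ((f x * g x)%R)%:E).
    apply: ae_eq_integral => //.
    - apply: measurable_funTS; apply/measurable_EFinP; apply: measurable_funM.
      + exact: mfaT.
      + have mcgT : measurable_fun [set: T] (clamp g) := mfunH_T hGz (ver_m vcg).
        exact: mcgT.
    - apply: measurable_funTS; apply/measurable_EFinP.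
      have mfgT : measurable_fun [set: T] (fun x => f x * g x)%R := mfunH_T hGz (ver_m vfgZ).
      exact: mfgT.
    - apply: filterS2 (ver_ae hGz vfaZ vfZ) (clamp_ae hGz my vgZ).
      by move=> x /(_ Logic.I) [->] -> _.
  rewrite (ver_int vfgZ Zz); congr (P _).
  by apply/seteqP; split => x /=; tauto.
have [smfa _ _] := vfa.
have hC : forall C, Gpi C -> \int[P]_(x in C) (fa x)%:E = P (a `&` C).
  by move=> _ [z [w [Zz [Ww ->]]]]; exact: K _ _ (WY' _ Ww) Zz.
have GpiT : Gpi setT by exists setT, setT; do 2 split => //; rewrite setIid.
have hT : \int[P]_x (fa x)%:E = P a by have := hC _ GpiT; rewrite setIT.
have vfa' : ver P Gpi a fa.
  split.
  - by move=> B0 mB0; apply: ZG; exact: smfa.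
  - exact: ifa.
  - by move=> C; apply: (EXT hGpi ma piI ifa hC hT).
have [g' [vg' g'01]] : exists g, ver P Gpi b g /\ (forall x, (0 <= g x <= 1)%R).
  exact: ver_exists01.
have mfa' := ver_m vfa'.
have mg' := ver_m vg'.
have mfgH : measurable_fun [set: g_sigma_algebraType Gpi] (liftH (fun x => fa x * g' x)%R).
  exact: measurable_funM mfa' mg'.
have mfgT : measurable_fun [set: T] (fun x => fa x * g' x)%R := mfunH_T hGpi mfgH.
have ifg : P.-integrable [set: T] (EFin \o (fun x => fa x * g' x)%R).
  apply: le_integrable ifa => //.
  - by apply/measurable_EFinP.
  - move=> x _; rewrite /= lee_fin normrM; apply: ler_piMr => //.
    by have /andP[g0' g1'] := g'01 x; rewrite ger0_norm.
have hC2 : forall C, Gpi C ->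
    \int[P]_(x in C) ((fa x * g' x)%R)%:E = P ((a `&` b) `&` C).
  move=> _ [z [w [Zz [Ww ->]]]].
  have zwG : <<s Gpi >> (z `&` w) := genI (ZG _ Zz) (WG _ Ww).
  pose h x := ((\1_(z `&` w) : T -> R) x * fa x)%R.
  have mh : measurable_fun [set: g_sigma_algebraType Gpi] (liftH h).
    apply: measurable_funM => //; exact: measurable_indic.
  have mhT : measurable_fun [set: T] h := mfunH_T hGpi mh.
  have ih : P.-integrable [set: T] (EFin \o h).
    apply: le_integrable ifa => //.
    - by apply/measurable_EFinP.
    - move=> x _; rewrite /h /= lee_fin normrM indicE.
      by case: (x \in _); rewrite ?normr1 ?normr0 ?mul1r ?mul0r.
  rewrite integral_mkcond.
  transitivity (\int[P]_x ((h x * g' x)%R)%:E).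
    apply: eq_integral => x _; rewrite /h /patch indicE.
    by case: ifP => _; rewrite ?mul1r ?mul0r.
  rewrite (PO hGpi mb vg' g'01 (mfun_subm mh) ih).
  transitivity (\int[P]_(x in (z `&` w) `&` b) (fa x)%:E).
    rewrite [RHS]integral_mkcondl; apply: eq_integral => x _.
    rewrite /h /patch indicE.
    by case: ifP => _; rewrite ?mul1r ?mul0r.
  rewrite -setIA K //; first by rewrite setI_shuffle.
  exact: genI (WY' _ Ww) (YY' _ Yb).
have hT2 : \int[P]_x ((fa x * g' x)%R)%:E = P (a `&` b).
  by have := hC2 _ GpiT; rewrite setIT.
exists fa, g'; split => //.
split.
- exact: mfun_subm mfgH.
- exact: ifg.
- by move=> C; apply: (EXT hGpi (measurableI _ _ ma mb) piI ifg hC2 hT2).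
Qed.
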